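(* Let $1<\alpha<\beta$ be real numbers and let $S_{\alpha,\beta}:=\{r\in\mathbb{Q}_{>0}: r\in(\beta^{-1},\alpha^{-1})\cup(\alpha,\beta)\}$. Then $$\chi(G(S_{\alpha,\beta}))\le \left\lceil \frac{\log\alpha\beta}{\log\alpha}\right\rceil.$$
   Context: For $R\subseteq\mathbb{Q}_{>0}\setminus\{1\}$, $G(R)$ is the graph with vertex set $\mathbb{N}=\{1,2,\dots\}$ and edge set $\{\{m,n\}: m/n\in R\}$. $\chi$ denotes chromatic number. *)

(* Defs.v *)
From HB Require Import structures.
From mathcomp Require Import all_boot all_order all_algebra.
From mathcomp Require Import reals exp.
Set Implicit Arguments. Unset Strict Implicit. Unset Printing Implicit Defensive.
Import Order.TTheory GRing.Theory Num.Theory.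
Local Open Scope ring_scope.

Definition Gedge (Rs : pred rat) (m n : nat) : Prop :=
  (0 < m)%N /\ (0 < n)%N /\ Rs (m%:Q / n%:Q).

Definition proper_coloring (Rs : pred rat) (k : nat) (c : nat -> 'I_k) : Prop :=
  forall m n : nat, Gedge Rs m n -> c m <> c n.

Definition chi_le (Rs : pred rat) (k : nat) : Prop :=
  exists c : nat -> 'I_k, proper_coloring Rs c.

Definition S_ab (R : realType) (alpha beta : R) : pred rat :=
  fun r => (0 < r) &&
    (((beta^-1 < ratr r) && (ratr r < alpha^-1)) ||
     ((alpha < ratr r) && (ratr r < beta))).

(* Main.v *)
Require Import Defs.
From HB Require Import structures.
From mathcomp Require Import all_boot all_order all_algebra.
From mathcomp Require Import reals exp.
From mathcomp Require Import lra.
Import Order.TTheory GRing.Theory Num.Theory.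
Local Open Scope ring_scope.

Lemma floor_gap (R : realType) (x y L : R) :
  1 < x - y -> x - y < L ->
  0 < Num.floor x - Num.floor y < Num.ceil (1 + L).
Proof.
move=> h1 h2; apply/andP; split.
  rewrite -(ltr_int R) rmorphB /=.
  have := floor_le y; have := floorD1_gt x; rewrite rmorphD /=; move: h1; lra.
rewrite -(ltr_int R) rmorphB /=.
have := floor_le x; have := floorD1_gt y; have := ceil_ge (1 + L).
rewrite rmorphD /=; move: h2; lra.
Qed.

Lemma modn_gap (a b k : nat) :
  (0 < (b:int) - (a:int) < (k:int))%R -> (b %% k)%N <> (a %% k)%N.
Proof.
move=> /andP [h1 h2] E.
have hab : (a < b)%N by rewrite -ltz_nat -subr_gt0.
have [e be] : exists e, b = (a + e)%N by exists (b - a)%N; rewrite subnKC // ltnW.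
subst b.
move: h1 h2; rewrite PoszD addrAC subrr add0r !ltz_nat => e0 ek.
move: E => /eqP; rewrite -{2}(addn0 a) eqn_modDl mod0n modn_small //.
by move/eqP => e00; rewrite e00 in e0.
Qed.

Theorem proposition2p2 (R : realType) (alpha beta : R) :
  1 < alpha -> alpha < beta ->
  chi_le (S_ab alpha beta) `|Num.ceil (ln (alpha * beta) / ln alpha)|%N.
Proof.
move=> h1 h2.
set a := ln alpha.
have a0 : 0 < a by exact: ln_gt0.
have alpha0 : 0 < alpha by lra.
have beta0 : 0 < beta by lra.
set L := ln beta / a.
have EL : ln (alpha * beta) / a = 1 + L.
  by rewrite lnM ?posrE // mulrDl divff // gt_eqF.
rewrite EL.
set K := Num.ceil (1 + L).
have L1 : 1 < L.
  rewrite /L ltr_pdivlMr // mul1r /a ltr_ln ?posrE //.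
have K0 : 0 <= K by rewrite ceil_ge0; lra.
set k := `|K|%N.
have Kk : K = k%:Z by rewrite /k gez0_abs.
have kpos : (0 < k)%N by rewrite -ltz_nat -Kk /K ceil_gt0; lra.
pose g (n : nat) : nat := `|Num.floor (ln (n%:R : R) / a)|%N.
have gE n : (0 < n)%N -> (g n : int) = Num.floor (ln (n%:R : R) / a).
  move=> n0; rewrite /g gez0_abs // floor_ge0 divr_ge0 //; last exact: ltW.
  by apply: ln_ge0; rewrite ler1n.

have key m n : (0 < m)%N -> (0 < n)%N ->
    a < ln (m%:R : R) - ln (n%:R : R) < ln beta -> (g m %% k)%N <> (g n %% k)%N.
  move=> m0 n0 /andP [u1 u2]; apply: modn_gap.
  rewrite gE // gE // -Kk; apply: floor_gap.
    by rewrite -mulrBl ltr_pdivlMr // mul1r.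
  by rewrite -mulrBl /L ltr_pM2r ?invr_gt0.
exists (fun n => Ordinal (ltn_pmod (g n) kpos)).
move=> m n [m0 [n0 hS]] /(congr1 val) /= E.
have mR : (0 : R) < m%:R by rewrite ltr0n.
have nR : (0 : R) < n%:R by rewrite ltr0n.
move: hS; rewrite /S_ab => /andP [_].
rewrite fmorph_div /= !ratr_nat.
have r0 : (0 : R) < m%:R / n%:R by rewrite divr_gt0.
case/orP => /andP [v1 v2].
- apply: (key n m n0 m0 _ (esym E)).
  have w1 := v1; have w2 := v2.
  rewrite -ltr_ln ?posrE ?invr_gt0 // lnV ?posrE // ln_div ?posrE // in w1.
  rewrite -ltr_ln ?posrE ?invr_gt0 // lnV ?posrE // ln_div ?posrE // in w2.
  rewrite /a; apply/andP; split; lra.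
- apply: (key m n m0 n0 _ E).
  rewrite -ltr_ln ?posrE // ln_div ?posrE // in v1.
  rewrite -ltr_ln ?posrE // ln_div ?posrE // in v2.
  by rewrite v1 v2.
Qed.
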